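(* Let $(\gamma^\sharp,\lambda^\sharp)$ be an eligible pair. Then $1-\gamma^{0T}\Sigma_{-1,-1}\gamma^\sharp\ge\Lambda_{\min}^2-o(1)$; in particular $1-\gamma^{0T}\Sigma_{-1,-1}\gamma^\sharp$ is eventually strictly positive and bounded away from zero. For $n$ sufficiently large define $$\Theta_1^\sharp:=\begin{pmatrix}1\\-\gamma^\sharp\end{pmatrix}\Big/\big(1-\gamma^{0T}\Sigma_{-1,-1}\gamma^\sharp\big)\in\mathbb{R}^p .$$ Then $\|\Sigma(\Theta_1^\sharp-\Theta_1)\|_\infty\le\lambda_0^\sharp$, where $\lambda_0^\sharp:=\lambda^\sharp/(1-\gamma^{0T}\Sigma_{-1,-1}\gamma^\sharp)=\mathcal{O}(\lambda^\sharp)$. Moreover $$\Theta_1^{\sharp T}\Sigma\Theta_1^\sharp=\Theta^\sharp_{1,1}+o(1)\le\Theta_{1,1}+o(1),$$ where $\Theta^\sharp_{1,1}$ denotes the first entry of $\Theta_1^\sharp$. Finally, in order that $\Theta_{1,1}-\Theta^\sharp_{1,1}$ be strictly positive and bounded away from zero, it must be true that $\lambda^\sharp\|\gamma^0\|_1$ is strictly positive and bounded away from zero.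
   Context: Asymptotic framework: all quantities may depend on $n$; limits are as $n\to\infty$. $\mathbf{x}=(\mathbf{x}_1,\dots,\mathbf{x}_p)$ is a zero-mean Gaussian row vector with covariance $\Sigma=\mathbb{E}\mathbf{x}^T\mathbf{x}$, nonsingular with all diagonal entries $1$ and smallest eigenvalue $\Lambda_{\min}^2$ with $1/\Lambda_{\min}^2=\mathcal{O}(1)$. $\Theta:=\Sigma^{-1}$, $\Theta_1$ is its first column and $\Theta_{1,1}$ its $(1,1)$ entry. $\mathbf{x}_{-1}:=(\mathbf{x}_2,\dots,\mathbf{x}_p)$, $\Sigma_{-1,-1}:=\mathbb{E}\mathbf{x}_{-1}^T\mathbf{x}_{-1}$, and $\gamma^0:=\Sigma_{-1,-1}^{-1}\mathbb{E}\mathbf{x}_{-1}^T\mathbf{x}_1\in\mathbb{R}^{p-1}$ is the coefficient vector of the projection of $\mathbf{x}_1$ on $\mathbf{x}_{-1}$. A pair $(\gamma^\sharp,\lambda^\sharp)$ with $\gamma^\sharp\in\mathbb{R}^{p-1}$, $\lambda^\sharp>0$ is called eligible if $\|\Sigma_{-1,-1}(\gamma^\sharp-\gamma^0)\|_\infty\le\lambda^\sharp$ and $\lambda^\sharp\|\gamma^\sharp\|_1\to0$. *)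

(* Defs.v *)
From HB Require Import structures.
From mathcomp Require Import all_boot all_order all_algebra.
From mathcomp Require Import all_classical all_reals all_analysis.
Set Implicit Arguments. Unset Strict Implicit. Unset Printing Implicit Defensive.
Import Order.TTheory GRing.Theory Num.Theory numFieldNormedType.Exports.
Local Open Scope classical_set_scope.
Local Open Scope ring_scope.

(* Convention: p = q.+1, coordinates indexed by 'I_q.+1, coordinate 1 of the
   paper is ord0, and the coordinates of x_{-1} are lift ord0 j, j : 'I_q. *)
Section Defs.
Variable R : realType.

Definition Smm (q : nat) (S : 'M[R]_q.+1) : 'M[R]_q :=
  \matrix_(i, j) S (lift ord0 i) (lift ord0 j).
Definition Sm1 (q : nat) (S : 'M[R]_q.+1) : 'cV[R]_q :=
  \col_i S (lift ord0 i) ord0.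
Definition gamma0 (q : nat) (S : 'M[R]_q.+1) : 'cV[R]_q :=
  invmx (Smm S) *m Sm1 S.

Definition supnorm (m : nat) (v : 'cV[R]_m) : R := \big[Num.max/0]_i `|v i 0|.
Definition l1norm (m : nat) (v : 'cV[R]_m) : R := \sum_i `|v i 0|.

Definition Theta1 (q : nat) (S : 'M[R]_q.+1) : 'cV[R]_q.+1 := col ord0 (invmx S).

Definition Dsharp (q : nat) (S : 'M[R]_q.+1) (g : 'cV[R]_q) : R :=
  1 - ((gamma0 S)^T *m Smm S *m g) 0 0.

Definition Theta1sharp (q : nat) (S : 'M[R]_q.+1) (g : 'cV[R]_q) : 'cV[R]_q.+1 :=
  (Dsharp S g)^-1 *:
    \col_(i < q.+1) match unlift ord0 i with None => 1 | Some j => - g j 0 end.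

Definition qform (m : nat) (S : 'M[R]_m) (v : 'cV[R]_m) : R := (v^T *m S *m v) 0 0.

Definition eligible (q : nat -> nat) (Sigma : forall n, 'M[R]_((q n).+1))
  (gs : forall n, 'cV[R]_(q n)) (ls : nat -> R) : Prop :=
  (forall n, 0 < ls n) /\
  (forall n, supnorm (Smm (Sigma n) *m (gs n - gamma0 (Sigma n))) <= ls n) /\
  ((fun n => ls n * l1norm (gs n)) @ \oo --> (0 : R)).
End Defs.

(* Main.v *)
Require Import Defs.
From HB Require Import structures.
From mathcomp Require Import all_boot all_order all_algebra.
From mathcomp Require Import all_classical all_reals all_analysis.
Import Order.TTheory GRing.Theory Num.Theory numFieldNormedType.Exports.
Local Open Scope classical_set_scope.
Local Open Scope ring_scope.
From mathcomp Require Import ring lra.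


Set Implicit Arguments. Unset Strict Implicit.
Section Ext.
Variable R : realType.
Variable q : nat.

Definition ext (a : R) (w : 'cV[R]_q) : 'cV[R]_q.+1 :=
  locked (\col_i match unlift ord0 i with None => a | Some j => w j 0 end).

Lemma extE a w i : ext a w i 0 = match unlift ord0 i with None => a | Some j => w j 0 end.
Proof. by rewrite /ext -lock mxE. Qed.

Lemma ext0 a w : ext a w ord0 0 = a.
Proof. by rewrite extE unlift_none. Qed.

Lemma extS a w j : ext a w (lift ord0 j) 0 = w j 0.
Proof. by rewrite extE liftK. Qed.

Lemma dot_ext a w b z : ((ext a w)^T *m ext b z) 0 0 = a * b + (w^T *m z) 0 0.
Proof.
rewrite !mxE big_ord_recl !mxE ext0 ext0; congr (_ + _).
by apply: eq_bigr => j _; rewrite !mxE !extS.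
Qed.

Lemma ext_eq a w b z : a = b -> w = z -> ext a w = ext b z.
Proof. by move=> -> ->. Qed.

Lemma scale_ext c a w : c *: ext a w = ext (c * a) (c *: w).
Proof.
apply/colP => i; rewrite !mxE !extE; case: (unliftP ord0 i) => [j _|_] //.
by rewrite mxE.
Qed.

Lemma sub_ext a w b z : ext a w - ext b z = ext (a - b) (w - z).
Proof.
apply/colP => i; rewrite !mxE !extE; case: (unliftP ord0 i) => [j _|_] //.
by rewrite !mxE.
Qed.

Lemma Ssym (S : 'M[R]_q.+1) : S^T = S -> forall i j, S i j = S j i.
Proof. by move=> H i j; rewrite -{1}H mxE. Qed.

Lemma mul_ext (S : 'M[R]_q.+1) : S^T = S -> S ord0 ord0 = 1 -> forall a w,
  S *m ext a w = ext (a + ((Sm1 S)^T *m w) 0 0) (a *: Sm1 S + Smm S *m w).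
Proof.
move=> Hs H1 a w; apply/colP => i; rewrite !mxE big_ord_recl ext0 extE.
case: (unliftP ord0 i) => [j ->|->].
  rewrite !mxE; congr (_ + _); first by rewrite mulrC.
  by apply: eq_bigr => k _; rewrite !mxE extS.
rewrite H1 mul1r; congr (_ + _); apply: eq_bigr => k _.
by rewrite !mxE extS (Ssym Hs).
Qed.

Lemma qformE m (S : 'M[R]_m) v : qform S v = (v^T *m (S *m v)) 0 0.
Proof. by rewrite /qform mulmxA. Qed.

Lemma Smm_sym (S : 'M[R]_q.+1) : S^T = S -> (Smm S)^T = Smm S.
Proof. by move=> Hs; apply/matrixP => i j; rewrite !mxE (Ssym Hs). Qed.

Lemma supnorm_ge0 m (v : 'cV[R]_m) : 0 <= supnorm v.
Proof. by rewrite /supnorm; elim/big_ind: _ => // x y hx hy; rewrite le_max hx. Qed.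

Lemma supnorm_ge m (v : 'cV[R]_m) i : `|v i 0| <= supnorm v.
Proof. exact: le_bigmax. Qed.

Lemma supnorm_le m (v : 'cV[R]_m) B : 0 <= B -> (forall i, `|v i 0| <= B) -> supnorm v <= B.
Proof. by move=> h0 h; apply: bigmax_le. Qed.

Lemma l1norm_ge0 m (v : 'cV[R]_m) : 0 <= l1norm v.
Proof. by rewrite /l1norm sumr_ge0. Qed.

Lemma dot_bound m (w v : 'cV[R]_m) : `|(w^T *m v) 0 0| <= l1norm w * supnorm v.
Proof.
rewrite mxE /l1norm mulr_suml; apply: le_trans (ler_norm_sum _ _ _) _.
apply: ler_sum => i _; rewrite mxE normrM ler_wpM2l //; exact: supnorm_ge.
Qed.

End Ext.


Set Implicit Arguments. Unset Strict Implicit.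
Section Ray.
Variable R : realType.

Definition bil m (A : 'M[R]_m) (x y : 'cV[R]_m) : R := (x^T *m A *m y) 0 0.
Definition nrm m (x : 'cV[R]_m) : R := (x^T *m x) 0 0.

Lemma nrmE m (x : 'cV[R]_m) : nrm x = \sum_i x i 0 ^+ 2.
Proof. by rewrite /nrm mxE; apply: eq_bigr => i _; rewrite mxE expr2. Qed.

Lemma nrm_ge0 m (x : 'cV[R]_m) : 0 <= nrm x.
Proof. by rewrite nrmE sumr_ge0 // => i _; rewrite sqr_ge0. Qed.

Lemma nrm_eq0 m (x : 'cV[R]_m) : nrm x = 0 -> x = 0.
Proof.
rewrite nrmE => /eqP; rewrite psumr_eq0 => [/allP H|i _]; last by rewrite sqr_ge0.
apply/colP => i; rewrite mxE; apply/eqP; rewrite -sqrf_eq0.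
by apply: (implyP (H i _)); rewrite ?mem_index_enum.
Qed.

Lemma sq_le_nrm m (x : 'cV[R]_m) i : x i 0 ^+ 2 <= nrm x.
Proof.
rewrite nrmE (bigD1 i) //= lerDl sumr_ge0 // => j _; exact: sqr_ge0.
Qed.

Lemma aux_ab (a b N : R) : 0 <= a -> 0 <= b -> a * a <= N -> b * b <= N -> a * b <= N.
Proof. move=> ha hb h1 h2; have := sqr_ge0 (a - b); rewrite expr2; nra. Qed.

Lemma prod_le_nrm m (x : 'cV[R]_m) i j : `|x i 0 * x j 0| <= nrm x.
Proof.
have h1 := sq_le_nrm x i; have h2 := sq_le_nrm x j.
rewrite -(real_normK (num_real (x i 0))) expr2 in h1.
rewrite -(real_normK (num_real (x j 0))) expr2 in h2.
by rewrite normrM; apply: aux_ab.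
Qed.

Lemma bil_bound m (M : 'M[R]_m) (x : 'cV[R]_m) :
  `|bil M x x| <= (\sum_j \sum_i `|M i j|) * nrm x.
Proof.
rewrite /bil mxE mulr_suml; apply: le_trans (ler_norm_sum _ _ _) _.
apply: ler_sum => j _; rewrite mxE mulr_suml mulr_suml.
apply: le_trans (ler_norm_sum _ _ _) _; apply: ler_sum => i _.
rewrite mxE -mulrA normrM [_ * nrm x]mulrC normrM mulrCA -normrM.
by rewrite [nrm x * _]mulrC ler_wpM2l // prod_le_nrm.
Qed.

Lemma Ssym0 m (S : 'M[R]_m) : S^T = S -> forall i j, S i j = S j i.
Proof. by move=> H i j; rewrite -{1}H mxE. Qed.

Lemma bil_sym m (A : 'M[R]_m) x y : A^T = A -> bil A y x = bil A x y.
Proof.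
move=> hA; rewrite /bil.
have -> : y^T *m A *m x = (x^T *m A *m y)^T by rewrite !trmx_mul trmxK hA mulmxA.
by rewrite mxE.
Qed.

Lemma bil_expand m (A : 'M[R]_m) x y t :
  bil A (x + t *: y) (x + t *: y) =
  bil A x x + t * bil A x y + t * bil A y x + t ^+ 2 * bil A y y.
Proof.
rewrite /bil; have -> : (x + t *: y)^T = x^T + t *: y^T by apply/matrixP => i j; rewrite !mxE.
rewrite !mulmxDl !mulmxDr -!scalemxAl -!scalemxAr !mxE.
ring.
Qed.


Lemma quad_disc (a b c : R) : 0 <= c ->
  (forall t, 0 <= a + t * b + t * b + t ^+ 2 * c) -> b ^+ 2 <= a * c.
Proof.
move=> hc H; have [cpos|] := ltP 0 c.
  have := H (- b / c); rewrite expr2 => h.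
  have e1 : - b / c * (- b / c) * c = b * b / c by field; rewrite gt_eqF.
  have e2 : - b / c * b = - (b * b / c) by field; rewrite gt_eqF.
  rewrite e1 e2 in h.
  have : b * b / c <= a by lra.
  by rewrite ler_pdivrMr // expr2.
move=> hc0; have c0 : c = 0 by apply/eqP; rewrite eq_le hc0 hc.
rewrite c0 mulr0; have [b0|bn0] := eqVneq b 0; first by rewrite b0 expr2 mulr0.
have := H (- (a + 1) / (2 * b)); rewrite c0 mulr0 addr0.
have -> : - (a + 1) / (2 * b) * b = - (a + 1) / 2.
  by field.
lra.
Qed.

Lemma CS m (A : 'M[R]_m) x y : A^T = A -> (forall z, 0 <= bil A z z) ->
  bil A x y ^+ 2 <= bil A x x * bil A y y.
Proof.
move=> hA hpos; apply: quad_disc => // t.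
by have := hpos (x + t *: y); rewrite bil_expand (bil_sym _ _ hA).
Qed.

Lemma bil_subI m (S : 'M[R]_m) mu x : bil (S - mu%:M) x x = bil S x x - mu * nrm x.
Proof.
rewrite /bil /nrm mulmxBr mulmxBl mul_mx_scalar -scalemxAl.
have h : forall (P Q : 'M[R]_1) (c : R), (P - c *: Q) 0 0 = P 0 0 - c * Q 0 0 by move=> P Q c; rewrite !mxE.
exact: h.
Qed.

Lemma bil0 m (S : 'M[R]_m) : bil S 0 0 = 0.
Proof. by rewrite /bil trmx0 !mul0mx mxE. Qed.

Lemma bil_inv m (A : 'M[R]_m) x : A \in unitmx -> bil A x (invmx A *m x) = nrm x.
Proof. by move=> hU; rewrite /bil -!mulmxA (mulmxA A) mulmxV // mul1mx. Qed.

Lemma bil_inv2 m (A : 'M[R]_m) x : A \in unitmx ->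
  bil A (invmx A *m x) (invmx A *m x) = bil (invmx A)^T x x.
Proof.
move=> hU; rewrite /bil trmx_mul -!mulmxA (mulmxA A) mulmxV // mul1mx.
by rewrite !mulmxA.
Qed.

Lemma rayleigh n (S : 'M[R]_n.+1) l : S^T = S -> (forall x, 0 <= bil S x x) ->
  (forall a, eigenvalue S a -> l <= a) -> forall x, l * nrm x <= bil S x x.
Proof.
move=> hS hpos hl.
pose E := [set r : R | exists2 x : 'cV[R]_n.+1, 0 < nrm x & r = bil S x x / nrm x].
have hlb : has_lbound E.
  by exists 0 => r [x hx ->]; rewrite divr_ge0 // ltW.
pose e : 'cV[R]_n.+1 := const_mx 1.
have he : 0 < nrm e.
  by apply: lt_le_trans (sq_le_nrm e ord0); rewrite mxE expr1n ltr01.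
have hne : E !=set0 by exists (bil S e e / nrm e); exists e.
set mu := inf E.
have hmu : forall x, 0 < nrm x -> mu * nrm x <= bil S x x.
  move=> x hx; rewrite -ler_pdivlMr //; apply: (ge_inf hlb); by exists x.
have hev : eigenvalue S mu.
  case: (boolP (eigenvalue S mu)) => // hne'; exfalso.
  have hU : (S - mu%:M) \in unitmx.
    by rewrite -row_free_unit -kermx_eq0; move: hne'; rewrite /eigenvalue negbK.
  set A := S - mu%:M in hU.
  have hA : A^T = A.
    by apply/matrixP => i j; rewrite /A !mxE -(Ssym0 hS) eq_sym.
  have hApos : forall z, 0 <= bil A z z.
    move=> z; rewrite /A bil_subI subr_ge0.
    have [hz|] := ltP 0 (nrm z); first exact: hmu.
    move=> hz; have z0 : nrm z = 0 by apply/eqP; rewrite eq_le hz nrm_ge0.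
    by rewrite (nrm_eq0 z0) bil0 /nrm trmx0 mul0mx mxE mulr0.
  set B := invmx A.
  set K := \sum_j \sum_i `|B^T i j|.
  have K0 : 0 <= K by rewrite sumr_ge0 // => j _; rewrite sumr_ge0.
  have key : forall x, 0 < nrm x -> nrm x <= bil A x x * K.
    move=> x hx; have h1 := CS x (B *m x) hA hApos.
    rewrite bil_inv // bil_inv2 // in h1.
    have h2 := bil_bound B^T x.
    have h3 : bil B^T x x <= K * nrm x by apply: le_trans (ler_norm _) h2.
    have h4 : nrm x ^+ 2 <= bil A x x * (K * nrm x).
      by apply: le_trans h1 _; rewrite ler_wpM2l.
    by rewrite -(ler_pM2r hx) -mulrA -expr2.
  have Kpos : 0 < K.
    rewrite lt_def K0 andbT; apply/negP => /eqP K00.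
    by have := key e he; rewrite K00 mulr0 leNgt he.
  have : mu + K^-1 <= mu.
    apply: lb_le_inf => // r [x hx ->].
    rewrite ler_pdivlMr // mulrDl.
    have := key x hx; rewrite /A bil_subI -ler_pdivrMr // mulrC => h.
    lra.
  have : 0 < K^-1 by rewrite invr_gt0.
  lra.
move=> x; have hlmu := hl _ hev.
have [hx|] := ltP 0 (nrm x).
  exact: le_trans (ler_wpM2r (nrm_ge0 x) hlmu) (hmu x hx).
move=> hx; have x0 : nrm x = 0 by apply/eqP; rewrite eq_le hx nrm_ge0.
by rewrite x0 mulr0.
Qed.

End Ray.

Set Implicit Arguments. Unset Strict Implicit.

Section Fixed.
Variable R : realType.
Variable q : nat.
Variable S : 'M[R]_q.+1.
Hypothesis hS : S^T = S.
Hypothesis hpos : forall x, 0 <= qform S x.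
Hypothesis hdiag : forall i, S i i = 1.
Hypothesis hU : S \in unitmx.
Variable l : R.
Hypothesis hl : eigenvalue S l.
Hypothesis hlm : forall a, eigenvalue S a -> l <= a.

Lemma bil_qform m (A : 'M[R]_m) x : qform A x = bil A x x.
Proof. by []. Qed.

Lemma ray x : l * nrm x <= qform S x.
Proof. by apply: rayleigh => // a; exact: hlm. Qed.

Lemma l_gt0 : 0 < l.
Proof.
have [v hv vn0] := eigenvalueP hl.
have nv : 0 < nrm v^T.
  rewrite lt_def nrm_ge0 andbT; apply/negP => /eqP /nrm_eq0 h.
  by move/eqP: vn0; apply; apply: trmx_inj; rewrite h trmx0.
have e : qform S v^T = l * nrm v^T.
  by rewrite /qform /nrm trmxK hv -scalemxAl mxE.
rewrite lt_def; apply/andP; split.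
  apply/negP => /eqP l0; move: hv; rewrite l0 scale0r => hv0.
  move/eqP: vn0; apply.
  by rewrite -[v]mulmx1 -(mulmxV hU) mulmxA hv0 mul0mx.
by have := hpos v^T; rewrite e pmulr_lge0.
Qed.

Local Notation M := (Smm S).
Local Notation sg := (Sm1 S).
Local Notation g0 := (gamma0 S).

Lemma hS00 : S ord0 ord0 = 1. Proof. exact: hdiag. Qed.

Lemma qform_ext0 (w : 'cV[R]_q) : qform S (ext 0 w) = bil M w w.
Proof.
rewrite qformE mul_ext // scale0r add0r dot_ext mul0r add0r.
by rewrite add0r /bil mulmxA.
Qed.

Lemma nrm_ext (a : R) (w : 'cV[R]_q) : nrm (ext a w) = a * a + nrm w.
Proof. by rewrite /nrm dot_ext. Qed.

Lemma M_pd (w : 'cV[R]_q) : l * nrm w <= bil M w w.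
Proof. by rewrite -qform_ext0; apply: le_trans (ray _); rewrite nrm_ext mul0r add0r. Qed.

Lemma M_unit : M \in unitmx.
Proof.
case: (boolP (M \in unitmx)) => // hn; exfalso.
have hev : eigenvalue M 0.
  rewrite /eigenvalue /eigenspace.
  have -> : M - 0%:M = M by apply/matrixP => i j; rewrite !mxE mul0rn subr0.
  by rewrite kermx_eq0 row_free_unit.
have [v hv vn0] := eigenvalueP hev.
rewrite scale0r in hv.
have nv : 0 < nrm v^T.
  rewrite lt_def nrm_ge0 andbT; apply/negP => /eqP /nrm_eq0 h.
  by move/eqP: vn0; apply; apply: trmx_inj; rewrite h trmx0.
have := M_pd v^T.
have -> : bil M v^T v^T = 0.
  by rewrite /bil trmxK hv mul0mx mxE.
by move=> h; have := mulr_gt0 l_gt0 nv; rewrite ltNge h.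
Qed.

Lemma M_sym : M^T = M. Proof. exact: Smm_sym. Qed.

Lemma Mg0 : M *m g0 = sg.
Proof. by rewrite /g0 /gamma0 mulKVmx // M_unit. Qed.

Lemma sgT : sg^T = g0^T *m M.
Proof. by rewrite -Mg0 trmx_mul M_sym. Qed.

Lemma sg_dot (x : 'cV[R]_q) : (sg^T *m x) 0 0 = bil M g0 x.
Proof. by rewrite sgT. Qed.

Definition D0 := 1 - bil M g0 g0.

Lemma Dsharp_E (g : 'cV[R]_q) : Dsharp S g = 1 - bil M g0 g.
Proof. by []. Qed.

Local Notation u := (ext 1 (- g0)).

Lemma Su : S *m u = ext D0 0.
Proof.
rewrite mul_ext // scale1r !mulmxN Mg0 subrr; congr ext; rewrite mxE sg_dot.
by rewrite /D0.
Qed.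

Lemma D0_q : qform S u = D0.
Proof. by rewrite qformE Su dot_ext mul1r /= mulmx0 mxE addr0. Qed.

Lemma D0_ge : l <= D0.
Proof.
rewrite -D0_q; apply: le_trans (ray _); rewrite nrm_ext mul1r.
by rewrite ler_pMr ?l_gt0 // lerDl nrm_ge0.
Qed.

Lemma D0_gt0 : 0 < D0.
Proof. exact: lt_le_trans l_gt0 D0_ge. Qed.

Lemma e1E : S *m Theta1 S = ext 1 0.
Proof.
rewrite /Theta1 colE mulmxA mulmxV // mul1mx.
apply/colP => i; rewrite extE !mxE; case: (unliftP ord0 i) => [j ->|->] //=.
by rewrite mxE.
Qed.

Lemma Theta1E : Theta1 S = D0^-1 *: u.
Proof.
rewrite -(mulKmx hU (Theta1 S)) e1E.
have -> : ext 1 0 = S *m (D0^-1 *: u).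
  by rewrite -scalemxAr Su scale_ext mulVf ?gt_eqF ?D0_gt0 // scaler0.
by rewrite mulKmx.
Qed.

Lemma Theta11 : Theta1 S ord0 0 = D0^-1.
Proof. by rewrite Theta1E mxE ext0 mulr1. Qed.



Variable g : 'cV[R]_q.
Variable ls : R.
Hypothesis hsup : supnorm (M *m (g - g0)) <= ls.
Local Notation h := (g - g0).
Local Notation D := (Dsharp S g).

Lemma ls_ge0 : 0 <= ls.
Proof. exact: le_trans (supnorm_ge0 _) hsup. Qed.

Lemma entryB (P Q : 'M[R]_1) : (P - Q) 0 0 = P 0 0 - Q 0 0.
Proof. by rewrite !mxE. Qed.

Lemma bilBr (a b c : 'cV[R]_q) : bil M a (b - c) = bil M a b - bil M a c.
Proof. by rewrite /bil mulmxBr entryB. Qed.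

Lemma bilBl (a b c : 'cV[R]_q) : bil M (a - b) c = bil M a c - bil M b c.
Proof.
rewrite /bil; have -> : (a - b)^T = a^T - b^T by apply/matrixP => i j; rewrite !mxE.
by rewrite !mulmxBl entryB.
Qed.

Lemma bil_dot (a b : 'cV[R]_q) : bil M a b = (a^T *m (M *m b)) 0 0.
Proof. by rewrite /bil mulmxA. Qed.

Lemma bnd_h (a : 'cV[R]_q) : `|bil M a h| <= ls * l1norm a.
Proof.
rewrite bil_dot mulrC; apply: le_trans (dot_bound _ _) _.
by rewrite ler_wpM2l // l1norm_ge0.
Qed.

Lemma DD : D0 - D = bil M g0 h.
Proof. by rewrite Dsharp_E /D0 bilBr; lra. Qed.

Lemma D_lower : D0 - D <= ls * l1norm g.
Proof.
rewrite DD.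
have -> : bil M g0 h = bil M g h - bil M h h.
  by rewrite -bilBl; congr bil; rewrite opprB addrC addrNK.
have hh : 0 <= bil M h h.
  by apply: le_trans (M_pd _); rewrite mulr_ge0 ?nrm_ge0 // ltW // l_gt0.
have := bnd_h g; rewrite ler_norml => /andP [_ H]; lra.
Qed.

Lemma D_abs : `|D0 - D| <= ls * l1norm g0.
Proof. by rewrite DD bnd_h. Qed.

Lemma TsE : Theta1sharp S g = D^-1 *: ext 1 (- g).
Proof.
rewrite /Theta1sharp; congr (_ *: _); apply/colP => i.
by rewrite mxE extE; case: (unlift ord0 i) => //= j; rewrite mxE.
Qed.

Lemma Ts0 : Theta1sharp S g ord0 0 = D^-1.
Proof. by rewrite TsE mxE ext0 mulr1. Qed.

Lemma Mh : sg - M *m g = - (M *m h).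
Proof. by rewrite mulmxBr Mg0 opprB. Qed.

Lemma Sext : S *m ext 1 (- g) = ext D (- (M *m h)).
Proof.
rewrite mul_ext // scale1r !mulmxN -Mh; congr ext.
by rewrite mxE sg_dot Dsharp_E.
Qed.

Lemma claim3 : 0 < D -> supnorm (S *m (Theta1sharp S g - Theta1 S)) <= ls / D.
Proof.
move=> Dp; rewrite mulmxBr e1E TsE -scalemxAr Sext scale_ext sub_ext subr0.
apply: supnorm_le; first by rewrite divr_ge0 // ?ls_ge0 // ltW.
move=> i; rewrite extE; case: (unlift ord0 i) => [j|].
  have Di : 0 <= D^-1 by rewrite invr_ge0 ltW.
  rewrite mxE [X in `|_ * X|]mxE normrM normrN (ger0_norm Di) mulrC.
  by apply: ler_wpM2r => //; exact: le_trans (supnorm_ge _ j) hsup.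
by rewrite mulVf ?gt_eqF // subrr normr0 divr_ge0 // ?ls_ge0 // ltW.
Qed.

Lemma claim5 : D != 0 ->
  qform S (Theta1sharp S g) - Theta1sharp S g ord0 0 =
  D^-1 * D^-1 * (g^T *m (M *m h)) 0 0.
Proof.
move=> Dn0; rewrite Ts0 qformE TsE -scalemxAr Sext !scale_ext dot_ext.
rewrite mulr1 mulVf // mulr1 [D^-1 + _]addrC addrK.
rewrite !mxE mulr_sumr; apply: eq_bigr => k _; rewrite !mxE.
ring.
Qed.

End Fixed.

Unset Implicit Arguments. Set Strict Implicit.

Lemma le_div_cc (R : realType) (x y D D0 c : R) : 0 < c -> c <= D -> c <= D0 ->
  x <= y -> 0 <= y -> x / (D * D0) <= y / (c * c).
Proof.
move=> c0 cD cD0 xy y0.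
have Dp : 0 < D by exact: lt_le_trans cD.
have D0p : 0 < D0 by exact: lt_le_trans cD0.
apply: le_trans (_ : y / (D * D0) <= _).
  by rewrite ler_wpM2r // invr_ge0 mulr_ge0 // ltW.
rewrite ler_wpM2l // lef_pV2 ?posrE ?mulr_gt0 //.
by rewrite ler_pM // ltW.
Qed.

Lemma fS1 {T : Type} {F : set_system T} {FF : Filter F} {P Q : T -> Prop} :
  F P -> (forall x, P x -> Q x) -> F Q.
Proof. by move=> h1 h; apply: filterS h1. Qed.

Lemma fS2 {T : Type} {F : set_system T} {FF : Filter F} {P Q R0 : T -> Prop} :
  F P -> F Q -> (forall x, P x -> Q x -> R0 x) -> F R0.
Proof. move=> h1 h2 h; exact: (@filterS2 T F FF P Q R0 h h1 h2). Qed.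

Lemma fS3 {T : Type} {F : set_system T} {FF : Filter F} {P Q R0 S0 : T -> Prop} :
  F P -> F Q -> F R0 -> (forall x, P x -> Q x -> R0 x -> S0 x) -> F S0.
Proof. move=> h1 h2 h3 h; exact: (@filterS3 T F FF P Q R0 S0 h h1 h2 h3). Qed.

Lemma inv_diff (R : realType) (D D0 : R) : D != 0 -> D0 != 0 ->
  D^-1 = D0^-1 + (D0 - D) / (D * D0).
Proof. by move=> h1 h2; field; rewrite h1 h2. Qed.

Lemma cvg0_le (R : realType) (u v : nat -> R) (K : R) : 0 < K ->
  v @ \oo --> (0 : R) -> (\forall n \near \oo, `|u n| <= K * `|v n|) ->
  u @ \oo --> (0 : R).
Proof.
move=> K0 hv hb; apply/cvgr0Pnorm_lt => eps he.
have hh := @cvgr0_norm_lt _ _ _ _ _ v hv _ (divr_gt0 he K0).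
have hh2 := hh eventually_filter. apply: (fS2 hb hh2) => n h1 h2.
apply: le_lt_trans h1 _.
by rewrite mulrC -ltr_pdivlMr.
Qed.

Theorem lemma2p1 (R : realType) (q : nat -> nat)
  (Sigma : forall n, 'M[R]_((q n).+1)) (lmin : nat -> R)
  (gs : forall n, 'cV[R]_(q n)) (ls : nat -> R)
  (Hsym : forall n, (Sigma n)^T = Sigma n)
  (Hpos : forall n (x : 'cV[R]_((q n).+1)), 0 <= qform (Sigma n) x)
  (Hinv : forall n, Sigma n \in unitmx)
  (Hdiag : forall n i, Sigma n i i = 1)
  (Hlev : forall n, eigenvalue (Sigma n) (lmin n))
  (Hlmin : forall n a, eigenvalue (Sigma n) a -> lmin n <= a)
  (Hbnd : exists C : R, \forall n \near \oo, (lmin n)^-1 <= C)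
  (Hel : eligible Sigma gs ls) :
  let D := fun n => Dsharp (Sigma n) (gs n) in
  let Ts := fun n => Theta1sharp (Sigma n) (gs n) in
  (exists e : nat -> R, e @ \oo --> (0 : R) /\ forall n, lmin n - e n <= D n) /\
  (exists c : R, 0 < c /\ \forall n \near \oo, c <= D n) /\
  (\forall n \near \oo,
     supnorm (Sigma n *m (Ts n - Theta1 (Sigma n))) <= ls n / D n) /\
  (exists C : R, \forall n \near \oo, ls n / D n <= C * ls n) /\
  ((fun n => qform (Sigma n) (Ts n) - Ts n ord0 0) @ \oo --> (0 : R)) /\
  (exists e : nat -> R, e @ \oo --> (0 : R) /\
     \forall n \near \oo, Ts n ord0 0 <= Theta1 (Sigma n) ord0 0 + e n) /\
  ((exists c : R, 0 < c /\
      \forall n \near \oo, c <= Theta1 (Sigma n) ord0 0 - Ts n ord0 0) ->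
   exists c : R, 0 < c /\
      \forall n \near \oo, c <= ls n * l1norm (gamma0 (Sigma n))).
Proof.
move=> D Ts.
case: Hel => Hls [Hsup Heps].
pose eps := fun n => ls n * l1norm (gs n).
have eps0 : forall n, 0 <= eps n.
  by move=> n; rewrite mulr_ge0 ?l1norm_ge0 // ltW.
have F1 : forall n, lmin n <= D0 (Sigma n).
  by move=> n; exact: (D0_ge (Hsym n) (Hpos n) (Hdiag n) (Hinv n) (Hlev n) (Hlmin n)).
have F2 : forall n, D0 (Sigma n) - D n <= eps n.
  by move=> n; exact: (D_lower (Hsym n) (Hpos n) (Hdiag n) (Hinv n) (Hlev n) (Hlmin n) (Hsup n)).
have F3 : forall n, 0 < lmin n.
  by move=> n; exact: (l_gt0 (Hpos n) (Hinv n) (Hlev n)).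
have C1 : forall n, lmin n - eps n <= D n.
  by move=> n; have := F1 n; have := F2 n; lra.
case: Hbnd => C0 HC0.
pose C := Num.max C0 1.
have Cp : 0 < C by rewrite lt_max ltr01 orbT.
pose c0 := C^-1.
have c0p : 0 < c0 by rewrite invr_gt0.
have Hl : \forall n \near \oo, c0 <= lmin n.
  apply: (fS1 HC0) => n h.
  have h' : (lmin n)^-1 <= C by apply: le_trans h _; rewrite le_max lexx.
  by rewrite /c0 -(invrK (lmin n)) lef_pV2 ?posrE ?invr_gt0 ?F3.
pose c := c0 / 2.
have cp : 0 < c by rewrite divr_gt0.
have Heps2 : \forall n \near \oo, eps n <= c.
  have := cvgr0_norm_lt _ Heps _ cp.
  move=> /(_ eventually_filter) hh; apply: (fS1 hh) => n h; apply: le_trans (ler_norm _) (ltW h).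
have HD : \forall n \near \oo, c <= D n.
  apply: (fS2 Hl Heps2) => n h1 h2.
  have := C1 n; move: h1 h2 c0p; rewrite /c; lra.
have HD0 : \forall n \near \oo, c <= D0 (Sigma n).
  apply: (fS1 Hl) => n h1.
  have := F1 n; move: h1 c0p; rewrite /c; lra.
split; first by exists eps; split.
split; first by exists c; split.
split.
  apply: (fS1 HD) => n h.
  exact: (claim3 (Hsym n) (Hpos n) (Hdiag n) (Hinv n) (Hlev n) (Hlmin n) (Hsup n) (lt_le_trans cp h)).
split.
  exists c^-1; apply: (fS1 HD) => n h.
  have Dp : 0 < D n by exact: lt_le_trans cp h.
  rewrite mulrC ler_wpM2r // ?(ltW (Hls n)) //.
  by rewrite lef_pV2 ?posrE.
split.
  apply: (@cvg0_le _ _ eps (c^-1 * c^-1)); first by rewrite mulr_gt0 ?invr_gt0.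
    exact: Heps.
  apply: (fS1 HD) => n h.
  have Dp : 0 < D n by exact: lt_le_trans cp h.
  rewrite /Ts (claim5 (Hsym n) (Hpos n) (Hdiag n) (Hinv n) (Hlev n) (Hlmin n)) ?gt_eqF //.
  rewrite normrM (ger0_norm (eps0 n)).
  have hb := bnd_h (Hsup n) (gs n).
  rewrite bil_dot in hb.
  apply: (@le_trans _ _ (`|(D n)^-1 * (D n)^-1| * eps n)).
    by rewrite ler_wpM2l.
  have Di : 0 <= (D n)^-1 by rewrite invr_ge0 ltW.
  rewrite ler_wpM2r // ger0_norm; last exact: mulr_ge0.
  have hi : (D n)^-1 <= c^-1 by rewrite lef_pV2 ?posrE.
  by apply: ler_pM.
split.
  exists (fun n => eps n / (c * c)); split.
    apply: (@cvg0_le _ _ eps ((c * c)^-1)); first by rewrite invr_gt0 mulr_gt0.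
      exact: Heps.
    apply: nearW => n; rewrite normrM mulrC (ger0_norm (ltW _)) //.
    by rewrite invr_gt0 mulr_gt0.
  apply: (fS2 HD HD0) => n h1 h2.
  have Dp : 0 < D n by exact: lt_le_trans cp h1.
  have D0p : 0 < D0 (Sigma n) by exact: lt_le_trans cp h2.
  rewrite /Ts Ts0 (Theta11 (Hsym n) (Hpos n) (Hdiag n) (Hinv n) (Hlev n) (Hlmin n)).
  rewrite (@inv_diff R _ _ (lt0r_neq0 Dp) (lt0r_neq0 D0p)) lerD2l.
  exact: le_div_cc.
case=> c1 [c1p Hc1].
exists (c1 * (c * c)); split; first by rewrite !mulr_gt0.
apply: (fS3 HD HD0 Hc1) => n h1 h2 h3.
have Dp : 0 < D n by exact: lt_le_trans cp h1.
have D0p : 0 < D0 (Sigma n) by exact: lt_le_trans cp h2.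
move: h3; rewrite /Ts Ts0 (Theta11 (Hsym n) (Hpos n) (Hdiag n) (Hinv n) (Hlev n) (Hlmin n)).
rewrite (@inv_diff R _ _ (lt0r_neq0 Dp) (lt0r_neq0 D0p)) => h3.
have h4 : (D0 (Sigma n))^-1 - ((D0 (Sigma n))^-1 + (D0 (Sigma n) - D n) / (D n * D0 (Sigma n)))
   = (D n - D0 (Sigma n)) / (D n * D0 (Sigma n)) by field; rewrite !gt_eqF.
rewrite h4 in h3.
have h5 := D_abs (Hsup n).
have h6 : (D n - D0 (Sigma n)) / (D n * D0 (Sigma n)) <= ls n * l1norm (gamma0 (Sigma n)) / (c * c).
  apply: le_div_cc => //.
    by apply: le_trans (ler_norm _) _; rewrite distrC.
  by rewrite mulr_ge0 ?l1norm_ge0 // ltW.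
rewrite -ler_pdivlMr ?mulr_gt0 //.
exact: le_trans h3 h6.
Qed.
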